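(* Let $\gamma\in\mathbb{R}\setminus\{0,1\}$, $\epsilon\in\mathbb{R}$, and set $\nu=\frac{\gamma-2}{\gamma-1}$, assumed not to be an integer. Let $\mathfrak g$ be a real Lie algebra and let $L\in\mathfrak g$ and $a_k,b_k\in\mathfrak g$ ($k=0,1,2,\dots$) satisfy: (a) $k\,\frac{\gamma-1}{\gamma}\,b_k+[a_{k-1},L]=0$ for all $k\ge1$; (b) the identity \[ \frac{\gamma-1}{\gamma}\sum_{k\ge1}k\,a_k\,z^{k-1+\nu}=\epsilon L+\sum_{k\ge0}[L,b_k]\,z^{k}, \] understood as an identity of formal sums of real powers of $z$ with $\mathfrak g$-valued coefficients (coefficients of each exponent compared separately); (c) $\sum_{k=1}^{N}[a_{k-1},b_{N-k}]=0$ for all $N\ge1$. Then \[ [a_0,b_0]=[a_0,b_1]=[L,b_1]=0,\qquad [b_0,b_1]=\epsilon b_1,\qquad [b_0,L]=\epsilon L,\qquad [a_0,L]=\frac{1}{\nu-2}\,b_1 . \] In particular, for $\epsilon\neq0$ these are the relations of the Lie algebra $\mathcal L$, and for $\epsilon=0$ they reduce to $[a_0,b_0]=[a_0,b_1]=[L,b_1]=[b_0,b_1]=[b_0,L]=0$, $[a_0,L]=\frac{1}{\nu-2}b_1$ (the Lie algebra $\mathcal L'$).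
   Context: These conditions arise from the prolongation equations $\frac{\gamma-1}{\gamma}P_z+[M,L]=0$, $\frac{\gamma-1}{\gamma}z^{\frac{\gamma-2}{\gamma-1}}M_z=\epsilon L+[L,P]$, $[M,P]=0$ for the equation $u_{tt}+\epsilon u_t=[(1+u/\gamma)^{\gamma-1}]_{xx}$, with $z=(1+u/\gamma)^{\gamma-1}$ and the ansatz $M=\sum_{k\ge0}a_k z^k$, $P=\sum_{k\ge0}b_k z^k$, where $L,a_k,b_k$ are (e.g.) vector fields in the pseudopotential variables. *)

(* Defs.v *)
From HB Require Import structures.
From mathcomp Require Import all_boot all_order all_algebra.
From mathcomp Require Import boolp reals.
Set Implicit Arguments. Unset Strict Implicit. Unset Printing Implicit Defensive.
Import Order.TTheory GRing.Theory Num.Theory.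
Local Open Scope ring_scope.

Definition is_lie_bracket (R : pzRingType) (V : lmodType R) (br : V -> V -> V) : Prop :=
  [/\ (forall (c : R) (x y z : V), br (c *: x + y) z = c *: br x z + br y z),
      (forall (c : R) (x y z : V), br z (c *: x + y) = c *: br z x + br z y),
      (forall x : V, br x x = 0) &
      (forall x y z : V, br x (br y z) + br y (br z x) + br z (br x y) = 0)].

(* Formal sums of real powers: a formal sum  sum_k c_k z^(k + s)  (k : nat)
   is represented by its coefficient function exponent |-> coefficient
   (R -> V). Since k |-> k + s is injective, the coefficient at exponent e
   is c_k if e = k + s for some (unique) k, and 0 otherwise. *)
Definition fseries (R : realType) (V : lmodType R) (c : nat -> V) (s : R) : R -> V :=
  fun e => match pselect (exists k : nat, k%:R + s = e) with
           | left H => c (projT1 (cid H))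
           | right _ => 0
           end.

Definition fconst (R : realType) (V : lmodType R) (v : V) : R -> V :=
  fun e => if e == 0 then v else 0.

(* Main.v *)
Require Import Defs.
From HB Require Import structures.
From mathcomp Require Import all_boot all_order all_algebra.
From mathcomp Require Import boolp reals.
From mathcomp Require Import ring.
Import Order.TTheory GRing.Theory Num.Theory.
Local Open Scope ring_scope.


Lemma fseries_at (R : realType) (V : lmodType R) (c : nat -> V) (s : R) (k : nat) :
  fseries c s (k%:R + s) = c k.
Proof.
rewrite /fseries; case: pselect => [H|H]; last by exfalso; apply: H; exists k.
case: (cid H) => k' /= /addIr /eqP; rewrite eqr_nat => /eqP -> //.
Qed.

Lemma fseries_out (R : realType) (V : lmodType R) (c : nat -> V) (s e : R) :
  (forall k : nat, k%:R + s != e) -> fseries c s e = 0.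
Proof.
move=> Hn; rewrite /fseries; case: pselect => [[k Hk]|//].
by move: (Hn k); rewrite Hk eqxx.
Qed.

Section Br.
Variables (R : realType) (V : lmodType R) (br : V -> V -> V).
Hypothesis Hb : is_lie_bracket br.

Lemma br0l y : br 0 y = 0.
Proof.
case: Hb => H1 _ _ _; have := H1 1 0 0 y; rewrite !scale1r addr0 => /(congr1 (fun v => v - br 0 y)).
by rewrite subrr addrK => <-.
Qed.
Lemma br0r y : br y 0 = 0.
Proof.
case: Hb => _ H1 _ _; have := H1 1 0 0 y; rewrite !scale1r addr0 => /(congr1 (fun v => v - br y 0)).
by rewrite subrr addrK => <-.
Qed.
Lemma brZl c x y : br (c *: x) y = c *: br x y.
Proof. by case: Hb => H1 _ _ _; have := H1 c x 0 y; rewrite addr0 br0l addr0. Qed.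
Lemma brZr c x y : br y (c *: x) = c *: br y x.
Proof. by case: Hb => _ H1 _ _; have := H1 c x 0 y; rewrite addr0 br0r addr0. Qed.
Lemma brDl x y z : br (x + y) z = br x z + br y z.
Proof. by case: Hb => H1 _ _ _; have := H1 1 x y z; rewrite !scale1r. Qed.
Lemma brDr x y z : br z (x + y) = br z x + br z y.
Proof. by case: Hb => _ H1 _ _; have := H1 1 x y z; rewrite !scale1r. Qed.
Lemma brC x y : br x y = - br y x.
Proof.
case: Hb => _ _ H3 _; have := H3 (x + y).
rewrite brDl !brDr !H3 add0r addr0 => /eqP; rewrite addr_eq0 => /eqP //.
Qed.
End Br.
Arguments br0l {R V br} Hb y.
Arguments br0r {R V br} Hb y.
Arguments brZl {R V br} Hb c x y.
Arguments brZr {R V br} Hb c x y.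
Arguments brDl {R V br} Hb x y z.
Arguments brDr {R V br} Hb x y z.
Arguments brC {R V br} Hb x y.

Theorem proposition4 (R : realType) (V : lmodType R) (br : V -> V -> V)
  (gamma eps nu : R) (L : V) (a b : nat -> V) :
  is_lie_bracket br ->
  gamma != 0 -> gamma != 1 ->
  nu = (gamma - 2) / (gamma - 1) ->
  (forall n : int, nu != n%:~R) ->
  (* (a) *)
  (forall k : nat, (0 < k)%N ->
     (k%:R * ((gamma - 1) / gamma)) *: b k + br (a k.-1) L = 0) ->
  (* (b): (g-1)/g sum_{k>=1} k a_k z^(k-1+nu) = eps L + sum_{k>=0} [L,b_k] z^k,
     reindexed k -> k+1 on the left, compared coefficientwise *)
  (forall e : R,
     fseries (fun k : nat => ((gamma - 1) / gamma * k.+1%:R) *: a k.+1) nu e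
     = fconst (eps *: L) e + fseries (fun k : nat => br L (b k)) 0 e) ->
  (* (c) *)
  (forall N : nat, (0 < N)%N ->
     \sum_(1 <= k < N.+1) br (a k.-1) (b (N - k)%N) = 0) ->
  [/\ br (a 0%N) (b 0%N) = 0, br (a 0%N) (b 1%N) = 0, br L (b 1%N) = 0,
      br (b 0%N) (b 1%N) = eps *: b 1%N &
      br (b 0%N) L = eps *: L] /\
  br (a 0%N) L = (nu - 2)^-1 *: b 1%N.
Proof.
move=> Hb g0 g1 nuE nuI Ha HB Hc.
have g1' : gamma - 1 != 0 by rewrite subr_eq0.
set c := (gamma - 1) / gamma.
have c0 : c != 0 by rewrite mulf_neq0 // invr_eq0.
have nonint : forall (k m : nat), k%:R + nu != m%:R + 0.
  move=> k m; apply/negP => /eqP H; move: (nuI (m%:Z - k%:Z)).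
  have -> : nu = m%:R - k%:R by rewrite -[nu](addKr k%:R) H addr0 addrC.
  by rewrite intrB eqxx.
have E0 := HB (0%:R + 0).
rewrite fseries_at fseries_out in E0; last by move=> k; exact: nonint.
rewrite /fconst addr0 eqxx in E0.
have E1 := HB (1%:R + 0).
rewrite fseries_at fseries_out in E1; last by move=> k; exact: nonint.
rewrite /fconst addr0 oner_eq0 add0r in E1.
have En := HB (0%:R + nu).
rewrite fseries_at (@fseries_out _ _ _ 0) in En; last first.
  by move=> k; rewrite eq_sym; exact: nonint.
rewrite /fconst add0r addr0 in En.
have nu0 : nu != 0 by move: (nuI 0); rewrite mulr0z.
rewrite (negbTE nu0) mulr1 in En.
have a1 : a 1%N = 0.
  by rewrite -[a 1%N]scale1r -(mulVf c0) -scalerA En scaler0.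
have bL : br (b 0%N) L = eps *: L.
  by rewrite (brC Hb); apply/eqP; rewrite eq_sym -subr_eq0 opprK -E0.
have H1 := Hc 1%N isT; rewrite big_nat1 /= in H1.
have H2 := Hc 2%N isT; rewrite big_nat_recr //= big_nat1 /= a1 (br0l Hb) addr0 in H2.
have A1 := Ha 1%N isT; rewrite /= mul1r in A1.
have aL : br (a 0%N) L = - (c *: b 1%N) by rewrite -[LHS]add0r -(addrN (c *: b 1%N)) addrC addrA (addrC _ (c *: _)) A1 add0r.
have b1E : b 1%N = - c^-1 *: br (a 0%N) L by rewrite aL scaleNr scalerN opprK scalerA mulVf // scale1r.
split; first split => //.
- have J0 : br (b 0%N) (br (a 0%N) L) = eps *: br (a 0%N) L.
    have [_ _ _ J] := Hb; have := J (b 0%N) (a 0%N) L.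
    rewrite (brC Hb L (b 0%N)) bL -scaleNr (brZr Hb) (brC Hb (b 0%N) (a 0%N)) H1 oppr0 (br0r Hb) addr0.
    by rewrite scaleNr => /eqP; rewrite addr_eq0 => /eqP ->; rewrite opprK.
  by rewrite {1}b1E (brZr Hb) J0 scalerA mulrC -scalerA -b1E.
- rewrite aL; rewrite nuE.
  have -> : (gamma - 2) / (gamma - 1) - 2 = - c^-1.
    by rewrite /c; field; apply/andP; split.
  by rewrite invrN invrK scaleNr.
Qed.
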